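(* Suppose the family of update functions $\mathrm{Upd}$ satisfies P1 and P2. If $\mathcal{M}=(W,\mathcal{F})$ is a measure space, $\Pr\in\Delta_{\mathcal{M}}$, $B\in\mathcal{F}$, and $\mathrm{Upd}^{\mathcal{M}}(\Pr,B)=\{\Pr'\}$, then $\Pr'=\Pr(\cdot|B)$.
   Context: A measure space is a pair $\mathcal{M}=(W,\mathcal{F})$ with $\mathcal{F}$ an algebra of subsets of $W$; $\Delta_{\mathcal{M}}$ is the set of all probability measures on $\mathcal{M}$. An update function on $\mathcal{M}$ is a map $\mathrm{Upd}^{\mathcal{M}}:2^{\Delta_{\mathcal{M}}}\times\mathcal{F}\to 2^{\Delta_{\mathcal{M}}}$ such that $\mathrm{Upd}^{\mathcal{M}}(X,B)=\emptyset$ whenever $\Pr(B)=0$ for all $\Pr\in X$; $\mathrm{Upd}^{\mathcal{M}}(\Pr,B)$ means $\mathrm{Upd}^{\mathcal{M}}(\{\Pr\},B)$. A family $\mathrm{Upd}=\{\mathrm{Upd}^{\mathcal{M}}\}$ has one update function for each measure space. $\Pr(A|B)=\Pr(A\cap B)/\Pr(B)$. A representation shift from $\mathcal{M}=(W,\mathcal{F})$ to $\mathcal{M}'=(W',\mathcal{F}')$ is a surjection $f:W\to W'$ with $f^{-1}(B)\in\mathcal{F}$ for all $B\in\mathcal{F}'$; $(f^*(\Pr))(A)=\Pr(f^{-1}(A))$, $f^*(X)=\{f^*(\Pr):\Pr\in X\}$. P1: for all $\mathcal{M}$, $X\subseteq\Delta_{\mathcal{M}}$, $B\in\mathcal{F}$: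 $\mathrm{Upd}^{\mathcal{M}}(X,B)\subseteq\{\Pr\in\Delta_{\mathcal{M}}:\Pr(B)=1\}$. P2: for every representation shift $f$ from $\mathcal{M}$ to $\mathcal{M}'$, every $X\subseteq\Delta_{\mathcal{M}}$ and $B\in\mathcal{F}'$: $\mathrm{Upd}^{\mathcal{M}'}(f^*(X),B)=f^*(\mathrm{Upd}^{\mathcal{M}}(X,f^{-1}(B)))$. *)

(* Defs.v *)
From Stdlib Require Import Reals ProofIrrelevance.
Open Scope R_scope.

(* An algebra of subsets of W (subsets are predicates W -> Prop).
   Closure under intersection is redundant (follows from the others) but
   included for convenience. *)
Record algebra (W : Type) := {
  in_alg : (W -> Prop) -> Prop;
  alg_full : in_alg (fun _ => True);
  alg_compl : forall A, in_alg A -> in_alg (fun w => ~ A w);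
  alg_union : forall A B, in_alg A -> in_alg B -> in_alg (fun w => A w \/ B w);
  alg_inter : forall A B, in_alg A -> in_alg B -> in_alg (fun w => A w /\ B w)
}.
Arguments in_alg {W} _ _.
Arguments alg_full {W} _.
Arguments alg_union {W} _ _ _ _ _.
Arguments alg_inter {W} _ _ _ _ _.

Definition mset {W : Type} (F : algebra W) := {A : W -> Prop | in_alg F A}.

Definition mfull {W} (F : algebra W) : mset F := exist _ (fun _ => True) (alg_full F).
Definition munion {W} {F : algebra W} (A B : mset F) : mset F :=
  exist _ (fun w => proj1_sig A w \/ proj1_sig B w)
        (alg_union F _ _ (proj2_sig A) (proj2_sig B)).
Definition minter {W} {F : algebra W} (A B : mset F) : mset F :=
  exist _ (fun w => proj1_sig A w /\ proj1_sig B w)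
        (alg_inter F _ _ (proj2_sig A) (proj2_sig B)).

Record prob {W : Type} (F : algebra W) := {
  pr :> mset F -> R;
  pr_nonneg : forall A, 0 <= pr A;
  pr_full : pr (mfull F) = 1;
  pr_add : forall A B : mset F,
      (forall w, proj1_sig A w -> proj1_sig B w -> False) ->
      pr (munion A B) = pr A + pr B
}.
Arguments pr {W F} _ _.

Definition pset {W} (F : algebra W) := prob F -> Prop.
Definition psingle {W} {F : algebra W} (P : prob F) : pset F := fun Q => Q = P.

Definition upd_fun {W} (F : algebra W) := pset F -> mset F -> pset F.

Definition is_update_fun {W} {F : algebra W} (U : upd_fun F) : Prop :=
  forall (X : pset F) (B : mset F),
    (forall P, X P -> P B = 0) -> forall Q, ~ U X B Q.

Definition upd_family := forall (W : Type) (F : algebra W), upd_fun F.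

Definition is_update_family (Upd : upd_family) : Prop :=
  forall (W : Type) (F : algebra W), is_update_fun (Upd W F).

Definition surjective {W W'} (f : W -> W') := forall y, exists x, f x = y.

Definition measurable_map {W W'} (F : algebra W) (F' : algebra W') (f : W -> W') :=
  forall B, in_alg F' B -> in_alg F (fun w => B (f w)).

Definition preim {W W'} {F : algebra W} {F' : algebra W'} {f : W -> W'}
  (Hf : measurable_map F F' f) (B : mset F') : mset F :=
  exist _ (fun w => proj1_sig B (f w)) (Hf _ (proj2_sig B)).

Lemma push_full {W W'} {F : algebra W} {F' : algebra W'} {f : W -> W'}
  (Hf : measurable_map F F' f) (P : prob F) : P (preim Hf (mfull F')) = 1.
Proof.
  rewrite <- (pr_full _ P). f_equal. unfold preim, mfull; simpl.
  f_equal. apply proof_irrelevance.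
Qed.

Lemma push_add {W W'} {F : algebra W} {F' : algebra W'} {f : W -> W'}
  (Hf : measurable_map F F' f) (P : prob F) (A B : mset F') :
  (forall w, proj1_sig A w -> proj1_sig B w -> False) ->
  P (preim Hf (munion A B)) = P (preim Hf A) + P (preim Hf B).
Proof.
  intros Hd.
  rewrite <- (pr_add _ P (preim Hf A) (preim Hf B)).
  - f_equal. unfold preim, munion; simpl. f_equal. apply proof_irrelevance.
  - intros w; simpl; apply Hd.
Qed.

Definition push {W W'} {F : algebra W} {F' : algebra W'} {f : W -> W'}
  (Hf : measurable_map F F' f) (P : prob F) : prob F' :=
  {| pr := fun B => P (preim Hf B);
     pr_nonneg := fun B => pr_nonneg _ P (preim Hf B);
     pr_full := push_full Hf P;
     pr_add := push_add Hf P |}.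

Definition pushset {W W'} {F : algebra W} {F' : algebra W'} {f : W -> W'}
  (Hf : measurable_map F F' f) (X : pset F) : pset F' :=
  fun Q => exists P, X P /\ Q = push Hf P.

Definition P1 (Upd : upd_family) : Prop :=
  forall (W : Type) (F : algebra W) (X : pset F) (B : mset F) (Q : prob F),
    Upd W F X B Q -> Q B = 1.

Definition P2 (Upd : upd_family) : Prop :=
  forall (W W' : Type) (F : algebra W) (F' : algebra W') (f : W -> W')
         (Hs : surjective f) (Hf : measurable_map F F' f)
         (X : pset F) (B : mset F') (Q : prob F'),
    Upd W' F' (pushset Hf X) B Q <-> pushset Hf (Upd W F X (preim Hf B)) Q.

(* Main.v *)
Require Import Defs.
From Stdlib Require Import Reals Lra Lia Psatz Arith ZArith ClassicalEpsilon FunctionalExtensionality PropExtensionality ProofIrrelevance Classical.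
Open Scope R_scope.

Lemma mset_ext {W} {F : algebra W} (S T : mset F) :
  (forall w, proj1_sig S w <-> proj1_sig T w) -> S = T.
Proof.
  destruct S as [S HS], T as [T HT]; simpl; intros H.
  assert (S = T) by (apply functional_extensionality; intro w; apply propositional_extensionality; auto).
  subst. f_equal. apply proof_irrelevance.
Qed.

Definition mcompl {W} {F : algebra W} (S : mset F) : mset F :=
  exist _ (fun w => ~ proj1_sig S w) (alg_compl W F _ (proj2_sig S)).

Lemma pr_ext {W} {F : algebra W} (P : prob F) (S T : mset F) :
  (forall w, proj1_sig S w <-> proj1_sig T w) -> P S = P T.
Proof. intros H; rewrite (mset_ext S T H); reflexivity. Qed.

Lemma pr_compl {W} {F : algebra W} (P : prob F) (S : mset F) : P (mcompl S) = 1 - P S.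
Proof.
  pose proof (pr_add F P S (mcompl S)) as H.
  rewrite (mset_ext (munion S (mcompl S)) (mfull F)) in H.
  - rewrite pr_full in H. simpl in H. assert (H' : 1 = P S + P (mcompl S)) by (apply H; simpl; tauto). lra.
  - intros w; simpl; split; [tauto|intros _; apply classic].
Qed.

Lemma pr_le1 {W} {F : algebra W} (P : prob F) (S : mset F) : P S <= 1.
Proof. pose proof (pr_compl P S). pose proof (pr_nonneg F P (mcompl S)). lra. Qed.

Lemma pr_empty {W} {F : algebra W} (P : prob F) (S : mset F) :
  (forall w, ~ proj1_sig S w) -> P S = 0.
Proof.
  intros H. pose proof (pr_add F P S S) as Ha.
  rewrite (mset_ext (munion S S) S) in Ha.
  - assert (P S = P S + P S) by (apply Ha; intros w Hw _; exact (H w Hw)). lra.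
  - intros w; simpl; tauto.
Qed.

Lemma pr_split {W} {F : algebra W} (P : prob F) (S T : mset F) :
  P S = P (minter S T) + P (minter S (mcompl T)).
Proof.
  rewrite <- pr_add.
  - apply pr_ext. intros w; simpl. destruct (classic (proj1_sig T w)); tauto.
  - simpl; tauto.
Qed.

Lemma pr_mono {W} {F : algebra W} (P : prob F) (S T : mset F) :
  (forall w, proj1_sig S w -> proj1_sig T w) -> P S <= P T.
Proof.
  intros H. rewrite (pr_split P T S).
  rewrite (pr_ext P (minter T S) S) by (intros w; simpl; split; [tauto|auto]).
  pose proof (pr_nonneg F P (minter T (mcompl S))). lra.
Qed.

Lemma prob_ext {W} {F : algebra W} (P Q : prob F) : (forall A, P A = Q A) -> P = Q.
Proof.
  destruct P as [p p1 p2 p3], Q as [q q1 q2 q3]; simpl; intros H.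
  assert (p = q) by (apply functional_extensionality; auto). subst.
  f_equal; apply proof_irrelevance.
Qed.

Definition alg_all (T : Type) : algebra T.
Proof. refine {| in_alg := fun _ => True |}; intros; exact I. Defined.
Definition ms {T} (S : T -> Prop) : mset (alg_all T) := exist _ S I.

Lemma ms_eta {T} (E : mset (alg_all T)) : E = ms (proj1_sig E).
Proof. apply mset_ext; intros; simpl; tauto. Qed.

Lemma ms_ext {T} (P : prob (alg_all T)) (S S' : T -> Prop) : (forall z, S z <-> S' z) -> P (ms S) = P (ms S').
Proof. intros H; apply pr_ext; exact H. Qed.
Lemma ms_union {T} (P : prob (alg_all T)) (S S' : T -> Prop) : (forall z, S z -> S' z -> False) ->
  P (ms (fun z => S z \/ S' z)) = P (ms S) + P (ms S').
Proof. intros H. rewrite <- (pr_add _ P (ms S) (ms S') H). apply ms_ext; simpl; tauto. Qed.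
Lemma ms_empty {T} (P : prob (alg_all T)) (S : T -> Prop) : (forall z, ~ S z) -> P (ms S) = 0.
Proof. intros H; apply pr_empty; exact H. Qed.
Lemma ms_compl {T} (P : prob (alg_all T)) (S : T -> Prop) : P (ms (fun z => ~ S z)) = 1 - P (ms S).
Proof. rewrite <- (pr_compl P (ms S)). apply ms_ext; simpl; tauto. Qed.
Lemma ms_split {T} (P : prob (alg_all T)) (S U : T -> Prop) :
  P (ms S) = P (ms (fun z => U z /\ S z)) + P (ms (fun z => ~ U z /\ S z)).
Proof. rewrite <- ms_union by tauto. apply ms_ext. intros z. destruct (classic (U z)); tauto. Qed.

Fixpoint sumN (f : nat -> R) (n : nat) : R :=
  match n with O => 0 | S n' => sumN f n' + f n' end.

Lemma sumN_ext f g n : (forall k, (k < n)%nat -> f k = g k) -> sumN f n = sumN g n.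
Proof. induction n; simpl; intros H; auto. rewrite IHn by (intros; apply H; lia). rewrite H by lia; auto. Qed.
Lemma sumN_plus f g n : sumN (fun k => f k + g k) n = sumN f n + sumN g n.
Proof. induction n; simpl; lra. Qed.
Lemma sumN_scal c f n : sumN (fun k => c * f k) n = c * sumN f n.
Proof. induction n; simpl; [lra|rewrite IHn; lra]. Qed.
Lemma sumN_const c n : sumN (fun _ => c) n = INR n * c.
Proof. induction n; simpl sumN; [simpl; lra|rewrite IHn, S_INR; lra]. Qed.
Lemma sumN_le f g n : (forall k, (k < n)%nat -> f k <= g k) -> sumN f n <= sumN g n.
Proof. induction n; simpl; intros H; [lra|]. pose proof (H n ltac:(lia)). pose proof (IHn ltac:(intros; apply H; lia)). lra. Qed.
Lemma sumN_nonneg f n : (forall k, (k < n)%nat -> 0 <= f k) -> 0 <= sumN f n.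
Proof. intros H. replace 0 with (sumN (fun _ => 0) n) by (rewrite sumN_const; lra). apply sumN_le; auto. Qed.
Lemma sumN_swap (F : nat -> nat -> R) n m :
  sumN (fun i => sumN (fun k => F i k) m) n = sumN (fun k => sumN (fun i => F i k) n) m.
Proof.
  induction n; simpl.
  - rewrite sumN_const. lra.
  - rewrite IHn. rewrite <- sumN_plus. reflexivity.
Qed.
Lemma sumN_shift f n : sumN f (S n) = f O + sumN (fun d => f (S d)) n.
Proof. induction n; simpl in *; [lra|]. rewrite IHn. lra. Qed.

Lemma sumN_S f n : sumN f (S n) = sumN f n + f n.
Proof. reflexivity. Qed.

Lemma sumN_rot1 f n : (0 < n)%nat -> sumN (fun d => f ((d + 1) mod n)%nat) n = sumN f n.
Proof.
  intros Hn. destruct n as [|n']; [lia|].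
  rewrite sumN_S. rewrite sumN_shift.
  replace ((n' + 1) mod S n')%nat with O.
  2:{ replace (n'+1)%nat with (1 * S n')%nat by lia. rewrite Nat.Div0.mod_mul. auto. }
  rewrite (sumN_ext _ (fun d => f (S d)) n').
  - lra.
  - intros k Hk. f_equal. rewrite Nat.mod_small by lia. lia.
Qed.

Lemma sumN_rot f n j : (0 < n)%nat -> sumN (fun k => f ((k + j) mod n)%nat) n = sumN f n.
Proof.
  intros Hn. revert f. induction j; intros f.
  - apply sumN_ext; intros k Hk. f_equal. rewrite Nat.add_0_r, Nat.mod_small; auto.
  - rewrite <- (sumN_rot1 f n Hn). rewrite <- (IHj (fun d => f ((d+1) mod n)%nat)).
    apply sumN_ext; intros k Hk. f_equal.
    rewrite Nat.Div0.add_mod_idemp_l. f_equal. lia.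
Qed.

Definition bind (b : bool) : R := if b then 1 else 0.

Definition inAd (m d : nat) (s : bool) : bool :=
  orb (Nat.ltb d (m-1)) (andb s (Nat.eqb d (m-1))).

Lemma count_inAd m u v n : (1 <= m)%nat -> (m <= n)%nat ->
  sumN (fun d => u * bind (inAd m d true) + v * bind (inAd m d false)) n = (INR m - 1) * (u + v) + u.
Proof.
  intros H1 H2.
  assert (G: forall N, sumN (fun d => u * bind (inAd m d true) + v * bind (inAd m d false)) N =
     if Nat.leb N (m-1) then INR N * (u+v) else (INR m - 1) * (u + v) + u).
  { induction N.
    - simpl. destruct (Nat.leb 0 (m-1)); simpl; lra.
    - simpl sumN. rewrite IHN. unfold inAd, bind.
      destruct (Nat.leb N (m-1)) eqn:E1; destruct (Nat.leb (S N) (m-1)) eqn:E2;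
      destruct (Nat.ltb N (m-1)) eqn:E3; destruct (Nat.eqb N (m-1)) eqn:E4; cbn [orb andb];
      apply Nat.leb_le in E1 || apply Nat.leb_gt in E1;
      apply Nat.leb_le in E2 || apply Nat.leb_gt in E2;
      apply Nat.ltb_lt in E3 || apply Nat.ltb_ge in E3;
      apply Nat.eqb_eq in E4 || apply Nat.eqb_neq in E4; try lia;
      rewrite ?S_INR; try lra;
      replace m with (S N) by lia; rewrite S_INR; lra. }
  rewrite G. destruct (Nat.leb n (m-1)) eqn:E; [apply Nat.leb_le in E; lia|auto].
Qed.

Definition indP (P : Prop) : R := if excluded_middle_informative P then 1 else 0.

Lemma indP_or (P Q : Prop) : (P -> Q -> False) -> indP (P \/ Q) = indP P + indP Q.
Proof.
  intros H; unfold indP;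
  destruct (excluded_middle_informative (P \/ Q)), (excluded_middle_informative P),
    (excluded_middle_informative Q); try tauto; lra.
Qed.
Lemma indP_nonneg P : 0 <= indP P.
Proof. unfold indP; destruct excluded_middle_informative; lra. Qed.

Lemma decomp {T} (R : prob (alg_all T)) (cl : T -> option (nat * bool)) (sel : nat -> bool -> bool) N :
  R (ms (fun z => exists k s, cl z = Some (k, s) /\ (k < N)%nat /\ sel k s = true)) =
  sumN (fun k => bind (sel k true) * R (ms (fun z => cl z = Some (k, true)))
               + bind (sel k false) * R (ms (fun z => cl z = Some (k, false)))) N.
Proof.
  induction N.
  - simpl. apply ms_empty. intros z [k [s [_ [H _]]]]; lia.
  - rewrite sumN_S, <- IHN.
    assert (Hs : forall s, R (ms (fun z => cl z = Some (N, s) /\ sel N s = true)) =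
                   bind (sel N s) * R (ms (fun z => cl z = Some (N, s)))).
    { intros s. unfold bind. destruct (sel N s).
      - rewrite Rmult_1_l. apply ms_ext. intuition.
      - rewrite Rmult_0_l. apply ms_empty. intros z [_ H]; discriminate. }
    rewrite <- !Hs. rewrite <- !ms_union.
    + apply ms_ext. intros z; split.
      * intros [k [s [H1 [H2 H3]]]].
        destruct (Nat.eq_dec k N) as [->|Hne].
        -- right. destruct s; [left|right]; auto.
        -- left. exists k, s. repeat split; auto; lia.
      * intros [[k [s [H1 [H2 H3]]]] | [[H1 H2]|[H1 H2]]].
        -- exists k, s; repeat split; auto; lia.
        -- exists N, true; auto.
        -- exists N, false; auto.
    + intros z [k [s [H1 [H2 _]]]] [[H3 _]|[H3 _]]; rewrite H1 in H3; injection H3; intros; lia.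
    + intros z [H1 _] [H2 _]. rewrite H1 in H2; discriminate.
Qed.

Definition W2 (Y : Type) := ((nat * bool) + Y)%type.

Definition isB {Y} (Bp : Y -> Prop) (y : Y) : bool :=
  if excluded_middle_informative (Bp y) then true else false.

Definition lab {Y} (a0 b0 : Y) (n m i k : nat) (s : bool) : Y :=
  if inAd m ((k + i) mod n) s then a0 else b0.

Definition gmap {Y} (Bp : Y -> Prop) (a0 b0 : Y) (n m i : nat) (z : W2 Y) : Y :=
  match z with
  | inl (k, s) => lab a0 b0 n m i k s
  | inr y => if isB Bp y then lab a0 b0 n m i 0 false else y
  end.

Definition cls {Y} (Bp : Y -> Prop) (n : nat) (z : W2 Y) : option (nat * bool) :=
  match z with
  | inl (k, s) => Some ((k mod n)%nat, s)
  | inr y => if isB Bp y then Some (0%nat, false) else None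
  end.

Definition Qfun {Y} (D : prob (alg_all Y)) (Bp : Y -> Prop) (n : nat) (u v : R)
  (S : mset (alg_all (W2 Y))) : R :=
  sumN (fun k => u * indP (proj1_sig S (inl (k, true))) + v * indP (proj1_sig S (inl (k, false)))) n
  + D (ms (fun y => ~ Bp y /\ proj1_sig S (inr y))).

Lemma Qfun_nonneg {Y} (D : prob (alg_all Y)) (Bp : Y -> Prop) (n : nat) (u v : R) (Hu : 0 <= u) (Hv : 0 <= v) S : 0 <= @Qfun Y D Bp n u v S.
Proof.
  unfold Qfun. pose proof (pr_nonneg _ D (ms (fun y => ~ Bp y /\ proj1_sig S (inr y)))).
  assert (0 <= sumN (fun k => u * indP (proj1_sig S (inl (k, true))) + v * indP (proj1_sig S (inl (k, false)))) n).
  { apply sumN_nonneg; intros k _. pose proof (indP_nonneg (proj1_sig S (inl (k, true)))).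
    pose proof (indP_nonneg (proj1_sig S (inl (k, false)))). nra. }
  lra.
Qed.

Lemma Qfun_full {Y} (D : prob (alg_all Y)) (Bp : Y -> Prop) (n : nat) (u v : R) (Hfull : INR n * (u + v) = D (ms Bp)) :
  @Qfun Y D Bp n u v (mfull _) = 1.
Proof.
  unfold Qfun; simpl.
  rewrite (sumN_ext _ (fun _ => u + v)).
  - rewrite sumN_const, Hfull.
    rewrite (ms_ext D (fun y => ~ Bp y /\ True) (fun y => ~ Bp y)) by (intros; simpl; tauto). rewrite ms_compl. lra.
  - intros k _. unfold indP. destruct excluded_middle_informative; [|tauto]. lra.
Qed.

Lemma Qfun_add {Y} (D : prob (alg_all Y)) (Bp : Y -> Prop) (n : nat) (u v : R) (A B : mset (alg_all (W2 Y))) :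
  (forall w, proj1_sig A w -> proj1_sig B w -> False) ->
  @Qfun Y D Bp n u v (munion A B) = Qfun D Bp n u v A + Qfun D Bp n u v B.
Proof.
  intros H. unfold Qfun, munion; cbn [proj1_sig].
  rewrite (sumN_ext _ (fun k => (u * indP (proj1_sig A (inl (k, true))) + v * indP (proj1_sig A (inl (k, false))))
     + (u * indP (proj1_sig B (inl (k, true))) + v * indP (proj1_sig B (inl (k, false)))))).
  - rewrite sumN_plus.
    rewrite (ms_ext D _ (fun y => (~ Bp y /\ proj1_sig A (inr y)) \/ (~ Bp y /\ proj1_sig B (inr y)))) by (intros; simpl; tauto).
    rewrite ms_union by (intros z [_ H1] [_ H2]; exact (H _ H1 H2)). lra.
  - intros k _. rewrite !indP_or by (apply H). lra.
Qed.

Definition Qm {Y} (D : prob (alg_all Y)) (Bp : Y -> Prop) (n : nat) (u v : R)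
  (Hu : 0 <= u) (Hv : 0 <= v) (Hfull : INR n * (u + v) = D (ms Bp)) : prob (alg_all (W2 Y)) :=
  {| pr := Qfun D Bp n u v;
     pr_nonneg := Qfun_nonneg D Bp n u v Hu Hv;
     pr_full := Qfun_full D Bp n u v Hfull;
     pr_add := Qfun_add D Bp n u v |}.

Definition Hfm {Y} (Bp : Y -> Prop) a0 b0 n m i :
  measurable_map (alg_all (W2 Y)) (alg_all Y) (gmap Bp a0 b0 n m i) := fun _ _ => I.

Lemma isB_true {Y} (Bp : Y -> Prop) y : isB Bp y = true <-> Bp y.
Proof. unfold isB; destruct excluded_middle_informative; split; intros; auto; discriminate. Qed.
Lemma isB_false {Y} (Bp : Y -> Prop) y : isB Bp y = false <-> ~ Bp y.
Proof. unfold isB; destruct excluded_middle_informative; split; intros; auto; try discriminate; tauto. Qed.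

Lemma lab_cases {Y} (a0 b0 : Y) n m i k s : lab a0 b0 n m i k s = a0 \/ lab a0 b0 n m i k s = b0.
Proof. unfold lab; destruct inAd; auto. Qed.

Lemma gmap_B {Y} (Bp : Y -> Prop) a0 b0 (HB : forall y, Bp y <-> y = a0 \/ y = b0) n m i z :
  Bp (gmap Bp a0 b0 n m i z) <-> cls Bp n z <> None.
Proof.
  destruct z as [[k s]|y]; simpl.
  - split; [discriminate|]. intros _. apply HB, lab_cases.
  - destruct (isB Bp y) eqn:E.
    + split; [discriminate|]. intros _. apply HB, lab_cases.
    + apply isB_false in E. split; [tauto|]. intros H; exfalso; apply H; auto.
Qed.

Lemma gmap_a {Y} (Bp : Y -> Prop) (a0 b0 : Y) (Hab : a0 <> b0)
  (HB : forall y, Bp y <-> y = a0 \/ y = b0) n m i (Hn : (0 < n)%nat) z :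
  gmap Bp a0 b0 n m i z = a0 <->
  exists k s, cls Bp n z = Some (k, s) /\ (k < n)%nat /\ inAd m ((k + i) mod n) s = true.
Proof.
  destruct z as [[k s]|y]; simpl.
  - unfold lab. rewrite <- (Nat.Div0.add_mod_idemp_l k i n).
    split.
    + intros H. exists (k mod n)%nat, s. split; auto. split; [apply Nat.mod_upper_bound; lia|].
      destruct inAd; auto; exfalso; apply Hab; auto.
    + intros [k' [s' [H1 [H2 H3]]]]. injection H1; intros; subst. rewrite H3; auto.
  - destruct (isB Bp y) eqn:E.
    + unfold lab. split.
      * intros H. exists 0%nat, false. split; auto. split; [lia|].
        destruct inAd; auto; exfalso; apply Hab; auto.
      * intros [k' [s' [H1 [H2 H3]]]]. injection H1; intros; subst. rewrite H3; auto.
    + apply isB_false in E. split.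
      * intros ->. exfalso; apply E, HB; auto.
      * intros [k' [s' [H1 _]]]; discriminate.
Qed.

Lemma gmap_surj {Y} (Bp : Y -> Prop) (a0 b0 : Y)
  (HB : forall y, Bp y <-> y = a0 \/ y = b0) n m i (H1 : (1 <= m)%nat) (H2 : (m <= n)%nat) :
  surjective (gmap Bp a0 b0 n m i).
Proof.
  intros y. destruct (classic (Bp y)) as [HBy|HBy].
  - apply HB in HBy as [->| ->].
    + exists (inl (n * (i + 1) - i, true)%nat). simpl. unfold lab.
      replace ((n * (i + 1) - i + i) mod n)%nat with O.
      * assert (inAd m 0 true = true) as ->; auto.
        unfold inAd; destruct m as [|[|m']]; [lia|reflexivity|reflexivity].
      * replace (n * (i + 1) - i + i)%nat with ((i+1) * n)%nat by nia.
        rewrite Nat.Div0.mod_mul; auto.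
    + exists (inl (n * (i + 1) - i - 1, false)%nat). simpl. unfold lab.
      replace ((n * (i + 1) - i - 1 + i) mod n)%nat with (n - 1)%nat.
      * assert (inAd m (n-1) false = false) as ->; auto.
        unfold inAd. rewrite (proj2 (Nat.ltb_ge _ _)) by lia. reflexivity.
      * replace (n * (i + 1) - i - 1 + i)%nat with ((n - 1) + i * n)%nat by nia.
        rewrite Nat.Div0.mod_add. rewrite Nat.mod_small; lia.
  - exists (inr y). simpl. destruct (isB Bp y) eqn:E; auto. apply (isB_true Bp y) in E. exfalso. apply HBy. exact E.
Qed.

Lemma D_point {Y} (D : prob (alg_all Y)) (a : Y) (S : Y -> Prop) :
  D (ms (fun y => y = a /\ S y)) = indP (S a) * D (ms (fun y => y = a)).
Proof.
  unfold indP; destruct excluded_middle_informative as [H|H].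
  - rewrite Rmult_1_l. apply ms_ext. intros z; split; [tauto|]. intros ->; auto.
  - rewrite Rmult_0_l. apply ms_empty. intros z [-> Hz]; auto.
Qed.

Lemma D_B {Y} (D : prob (alg_all Y)) (Bp : Y -> Prop) (a0 b0 : Y) (Hab : a0 <> b0)
  (HB : forall y, Bp y <-> y = a0 \/ y = b0) :
  D (ms Bp) = D (ms (fun y => y = a0)) + D (ms (fun y => y = b0)).
Proof.
  rewrite <- ms_union by (intros z -> ->; auto). apply ms_ext. exact HB.
Qed.

Lemma push_Qm {Y} (D : prob (alg_all Y)) (Bp : Y -> Prop) (a0 b0 : Y) (Hab : a0 <> b0)
  (HB : forall y, Bp y <-> y = a0 \/ y = b0) (n m : nat) (u v : R) (Hu : 0 <= u) (Hv : 0 <= v)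
  (Hfull : INR n * (u + v) = D (ms Bp)) (H1 : (1 <= m)%nat) (H2 : (m <= n)%nat)
  (Hp : (INR m - 1) * (u + v) + u = D (ms (fun y => y = a0))) (i : nat) :
  push (Hfm Bp a0 b0 n m i) (Qm D Bp n u v Hu Hv Hfull) = D.
Proof.
  apply prob_ext. intros E. rewrite (ms_eta E). set (S := proj1_sig E).
  change (Qfun D Bp n u v (preim (Hfm Bp a0 b0 n m i) (ms S)) = D (ms S)).
  unfold Qfun, preim; cbn [proj1_sig ms].
  rewrite (ms_ext D (fun y => ~ Bp y /\ S (gmap Bp a0 b0 n m i (inr y))) (fun y => ~ Bp y /\ S y)).
  2:{ intros y. simpl. destruct (isB Bp y) eqn:Ey.
      - apply (isB_true Bp y) in Ey. tauto.
      - tauto. }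
  set (A := fun d => u * bind (inAd m d true) + v * bind (inAd m d false)).
  rewrite (sumN_ext _ (fun k => (fun d => indP (S a0) * A d + indP (S b0) * ((u + v) + (-1) * A d)) ((k + i) mod n)%nat)).
  2:{ intros k _. cbv beta. unfold gmap, A, lab, bind. destruct (inAd m ((k + i) mod n) true), (inAd m ((k + i) mod n) false); ring. }
  rewrite (sumN_rot (fun d => indP (S a0) * A d + indP (S b0) * ((u + v) + (-1) * A d)) n i) by lia. rewrite sumN_plus, !sumN_scal, sumN_plus, sumN_scal, sumN_const.
  unfold A. rewrite count_inAd by auto. rewrite Hp, Hfull.
  rewrite (ms_split D S Bp).
  rewrite (ms_ext D (fun z => Bp z /\ S z) (fun z => (z = a0 /\ S z) \/ (z = b0 /\ S z))).
  2:{ intros z. rewrite HB. tauto. }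
  rewrite ms_union by (intros z [-> _] [Hz _]; auto).
  rewrite !D_point. rewrite (D_B D Bp a0 b0 Hab HB). ring.
Qed.

Lemma cls_lt {Y} (Bp : Y -> Prop) n z k s : (0 < n)%nat -> cls Bp n z = Some (k, s) -> (k < n)%nat.
Proof.
  intros Hn. destruct z as [[k' s']|y]; simpl.
  - intros H; injection H; intros; subst. apply Nat.mod_upper_bound; lia.
  - destruct isB; intros H; [injection H; intros; subst; lia|discriminate].
Qed.

Lemma nat_of_up (r : R) : 0 <= r -> exists m : nat, r < INR m /\ INR m - r <= 1.
Proof.
  intros Hr. destruct (archimed r) as [Ha1 Ha2].
  exists (Z.to_nat (up r)). rewrite INR_IZR_INZ, Z2Nat.id; [lra|].
  apply le_IZR. lra.
Qed.

Lemma key_le (Upd : upd_family) (HP1 : P1 Upd) (HP2 : P2 Upd) (Y : Type)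
  (D rho : prob (alg_all Y)) (a0 b0 : Y) (Hab : a0 <> b0) (Bp : Y -> Prop)
  (HB : forall y, Bp y <-> y = a0 \/ y = b0) (Hpos : 0 < D (ms Bp))
  (HU : forall Q, Upd Y (alg_all Y) (psingle D) (ms Bp) Q <-> Q = rho) :
  rho (ms (fun y => y = a0)) <= D (ms (fun y => y = a0)) / D (ms Bp).
Proof.
  assert (DB := D_B D Bp a0 b0 Hab HB).
  set (p := D (ms (fun y => y = a0))) in *. set (q := D (ms (fun y => y = b0))) in *.
  set (x := rho (ms (fun y => y = a0))).
  pose proof (pr_nonneg _ D (ms (fun y => y = a0))) as Hp0. fold p in Hp0.
  pose proof (pr_nonneg _ D (ms (fun y => y = b0))) as Hq0. fold q in Hq0.
  pose proof (pr_le1 rho (ms (fun y => y = a0))) as Hx1. fold x in Hx1.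
  rewrite DB. rewrite DB in Hpos.
  set (t := p / (p + q)).
  assert (HtP : t * (p + q) = p) by (unfold t; field; lra).
  apply Rnot_lt_le; intros Hlt.
  assert (Hq : 0 < q).
  { destruct (Rle_lt_or_eq_dec 0 q Hq0) as [H|H]; auto. exfalso. rewrite <- H in HtP. nra. }
  assert (Ht1 : t < 1) by nra.
  assert (Ht0 : 0 <= t) by nra.
  destruct (nat_of_up (/ (x - t))) as [n [Hn1 _]].
  { left. apply Rinv_0_lt_compat. lra. }
  assert (Hnx : INR n * (x - t) > 1).
  { assert (Hxt : 0 < x - t) by lra.
    apply (Rmult_lt_compat_l (x - t)) in Hn1; auto. rewrite Rinv_r in Hn1 by lra. lra. }
  assert (Hn : (0 < n)%nat).
  { destruct n; [simpl in Hnx; lra|lia]. }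
  assert (HnR : 0 < INR n) by (apply lt_0_INR; auto).
  destruct (nat_of_up (INR n * t)) as [m [Hm1 Hm2]]; [nra|].
  assert (Hm : (1 <= m)%nat).
  { destruct m; [simpl in Hm1; nra|lia]. }
  assert (Hmn : (m <= n)%nat).
  { assert (INR m < INR (S n)) by (rewrite S_INR; nra). apply INR_lt in H. lia. }
  set (w := (p + q) / INR n).
  assert (Hnw : INR n * w = p + q) by (unfold w; field; lra).
  assert (Hw0 : 0 <= w) by nra.
  set (u := p - (INR m - 1) * w). set (v := w - u).
  assert (Hu : 0 <= u).
  { unfold u. assert ((INR m - 1) * w <= INR n * t * w) by (apply Rmult_le_compat_r; lra).
    assert (INR n * t * w = p) by (rewrite <- HtP, <- Hnw; ring). lra. }
  assert (Hv : 0 <= v).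
  { unfold v, u. assert (INR n * t * w <= INR m * w) by (apply Rmult_le_compat_r; lra).
    assert (INR n * t * w = p) by (rewrite <- HtP, <- Hnw; ring). lra. }
  assert (Huv : u + v = w) by (unfold v; ring).
  assert (Hfull : INR n * (u + v) = D (ms Bp)) by (rewrite Huv, Hnw, DB; reflexivity).
  assert (Hp : (INR m - 1) * (u + v) + u = D (ms (fun y => y = a0))) by (rewrite Huv; unfold u; fold p; ring).
  set (Q0 := Qm D Bp n u v Hu Hv Hfull).
  assert (Hps : forall i, pushset (Hfm Bp a0 b0 n m i) (psingle Q0) = psingle D).
  { intros i. apply functional_extensionality; intros Q. apply propositional_extensionality.
    unfold pushset, psingle. split.
    - intros [P0 [-> ->]]. apply push_Qm; auto.
    - intros ->. exists Q0. split; auto. symmetry. apply push_Qm; auto. }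
  assert (Hpre : forall i, preim (Hfm Bp a0 b0 n m i) (ms Bp) = preim (Hfm Bp a0 b0 n m 0) (ms Bp)).
  { intros i. apply mset_ext. intros z. simpl. rewrite !(gmap_B Bp a0 b0 HB). tauto. }
  destruct (proj1 (HP2 _ _ _ _ _ (gmap_surj Bp a0 b0 HB n m 0 Hm Hmn) (Hfm Bp a0 b0 n m 0)
               (psingle Q0) (ms Bp) rho)) as [R [HR Hrho]].
  { rewrite Hps. apply HU. reflexivity. }
  assert (Hall : forall i, push (Hfm Bp a0 b0 n m i) R = rho).
  { intros i. apply HU. rewrite <- (Hps i).
    apply (HP2 _ _ _ _ _ (gmap_surj Bp a0 b0 HB n m i Hm Hmn) (Hfm Bp a0 b0 n m i)).
    exists R. split; [rewrite Hpre; exact HR|reflexivity]. }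
  set (al := fun k => R (ms (fun z => cls Bp n z = Some (k, true)))).
  set (be := fun k => R (ms (fun z => cls Bp n z = Some (k, false)))).
  assert (Hx : forall i, x = sumN (fun k => bind (inAd m ((k + i) mod n) true) * al k
                                        + bind (inAd m ((k + i) mod n) false) * be k) n).
  { intros i. unfold x. rewrite <- (Hall i). simpl.
    unfold al, be. rewrite <- (decomp R (cls Bp n) (fun k s => inAd m ((k + i) mod n) s) n).
    apply pr_ext. intros z; simpl. apply gmap_a; auto. }
  assert (H1R : 1 = sumN (fun k => al k + be k) n).
  { rewrite <- (HP1 _ _ _ _ _ HR).
    rewrite (sumN_ext _ (fun k => bind ((fun _ _ => true) k true) * al k + bind ((fun _ _ => true) k false) * be k))
      by (intros; simpl; unfold bind; ring).
    unfold al, be. rewrite <- (decomp R (cls Bp n) (fun _ _ => true) n).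
    apply pr_ext. intros z; simpl. rewrite (gmap_B Bp a0 b0 HB). split.
    - destruct (cls Bp n z) as [[k s]|] eqn:E; [|tauto]. intros _. exists k, s.
      split; auto. split; auto. eapply cls_lt; eauto.
    - intros [k [s [E _]]]. rewrite E. discriminate. }
  assert (Hsum : INR n * x <= INR m).
  { rewrite <- sumN_const.
    rewrite (sumN_ext (fun _ => x) (fun i => sumN (fun k => bind (inAd m ((k + i) mod n) true) * al k
                                        + bind (inAd m ((k + i) mod n) false) * be k) n))
      by (intros; apply Hx).
    rewrite sumN_swap.
    rewrite (sumN_ext _ (fun k => (INR m - 1) * (al k + be k) + al k)).
    2:{ intros k _. rewrite <- (count_inAd m (al k) (be k) n Hm Hmn).
        rewrite <- (sumN_rot (fun d => al k * bind (inAd m d true) + be k * bind (inAd m d false)) n k Hn).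
        apply sumN_ext; intros i _. rewrite (Nat.add_comm i k). ring. }
    apply Rle_trans with (sumN (fun k => INR m * (al k + be k)) n).
    2:{ rewrite sumN_scal, <- H1R. lra. }
    apply sumN_le. intros k _. unfold be. pose proof (pr_nonneg _ R (ms (fun z => cls Bp n z = Some (k, false)))). lra. }
  nra.
Qed.

Lemma key_eq (Upd : upd_family) (HP1 : P1 Upd) (HP2 : P2 Upd) (Y : Type)
  (D rho : prob (alg_all Y)) (a0 b0 : Y) (Hab : a0 <> b0) (Bp : Y -> Prop)
  (HB : forall y, Bp y <-> y = a0 \/ y = b0) (Hpos : 0 < D (ms Bp))
  (HU : forall Q, Upd Y (alg_all Y) (psingle D) (ms Bp) Q <-> Q = rho) :
  rho (ms (fun y => y = a0)) = D (ms (fun y => y = a0)) / D (ms Bp).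
Proof.
  pose proof (key_le Upd HP1 HP2 Y D rho a0 b0 Hab Bp HB Hpos HU) as H1.
  assert (HB' : forall y, Bp y <-> y = b0 \/ y = a0) by (intros y; rewrite HB; tauto).
  pose proof (key_le Upd HP1 HP2 Y D rho b0 a0 (not_eq_sym Hab) Bp HB' Hpos HU) as H2.
  assert (Hr1 : rho (ms Bp) = 1) by (apply (HP1 _ _ (psingle D)); apply HU; reflexivity).
  rewrite (D_B rho Bp a0 b0 Hab HB) in Hr1.
  rewrite (D_B D Bp a0 b0 Hab HB) in *.
  set (p := D (ms (fun y => y = a0))) in *. set (q := D (ms (fun y => y = b0))) in *.
  assert (Hs : p / (p + q) + q / (p + q) = 1) by (field; lra).
  lra.
Qed.

Lemma transfer (Upd : upd_family) (HP1 : P1 Upd) (HP2 : P2 Upd)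
  (W : Type) (F : algebra W) (P : prob F) (B : mset F) (P' : prob F)
  (HU : forall Q, Upd W F (psingle P) B Q <-> Q = P') (HPB : 0 < P B)
  (Y : Type) (f : W -> Y) (Hs : surjective f) (Hm : forall S : Y -> Prop, in_alg F (fun w => S (f w)))
  (a0 b0 : Y) (Hab : a0 <> b0) (HfB : forall w, proj1_sig B w <-> f w = a0 \/ f w = b0)
  (A0 : mset F) (HfA : forall w, proj1_sig A0 w <-> f w = a0) :
  P' A0 = P A0 / P B.
Proof.
  set (Hf := (fun S _ => Hm S) : measurable_map F (alg_all Y) f).
  set (Bp := fun y => y = a0 \/ y = b0).
  assert (HpB : preim Hf (ms Bp) = B) by (apply mset_ext; intros w; simpl; unfold Bp; rewrite HfB; tauto).
  assert (HpA : preim Hf (ms (fun y => y = a0)) = A0) by (apply mset_ext; intros w; simpl; rewrite HfA; tauto).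
  assert (HUY : forall Q, Upd Y (alg_all Y) (psingle (push Hf P)) (ms Bp) Q <-> Q = push Hf P').
  { intros Q.
    assert (E : pushset Hf (psingle P) = psingle (push Hf P)).
    { apply functional_extensionality; intros Q0. apply propositional_extensionality.
      unfold pushset, psingle. split; [intros [P0 [-> ->]]; auto|intros ->; exists P; auto]. }
    rewrite <- E. rewrite (HP2 W Y F (alg_all Y) f Hs Hf (psingle P) (ms Bp) Q). rewrite HpB.
    unfold pushset. split.
    - intros [P0 [H1 ->]]. apply HU in H1. subst; auto.
    - intros ->. exists P'. split; auto. apply HU; auto. }
  assert (Hpos : 0 < push Hf P (ms Bp)) by (simpl; rewrite HpB; auto).
  pose proof (key_eq Upd HP1 HP2 Y (push Hf P) (push Hf P') a0 b0 Hab Bp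
     (fun y => iff_refl _) Hpos HUY) as K.
  simpl in K. rewrite HpA, HpB in K. exact K.
Qed.

Lemma in_alg_ext {W} (F : algebra W) (S T : W -> Prop) : (forall w, S w <-> T w) -> in_alg F S -> in_alg F T.
Proof.
  intros H HS. replace T with S; auto.
  apply functional_extensionality; intros w; apply propositional_extensionality; auto.
Qed.

Lemma in_alg_and_c {W} (F : algebra W) (T : W -> Prop) (c : Prop) : in_alg F T -> in_alg F (fun w => T w /\ c).
Proof.
  intros HT. destruct (classic c) as [Hc|Hc].
  - apply (in_alg_ext F T); auto. intros; tauto.
  - apply (in_alg_ext F (fun w => ~ True)); [intros; tauto|]. apply alg_compl, alg_full.
Qed.

Theorem proposition4p4 (Upd : upd_family)
  (HUpd : is_update_family Upd) (HP1 : P1 Upd) (HP2 : P2 Upd)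
  (W : Type) (F : algebra W) (P : prob F) (B : mset F) (P' : prob F) :
  (forall Q, Upd W F (psingle P) B Q <-> Q = P') ->
  0 < P B /\ forall A : mset F, P' A = P (minter A B) / P B.
Proof.
  intros HU.
  assert (HPB : 0 < P B).
  { destruct (Rle_lt_or_eq_dec 0 (P B) (pr_nonneg F P B)) as [H|H]; auto. exfalso.
    apply (HUpd W F (psingle P) B (fun P0 H0 => ltac:(rewrite H0; auto)) P'). apply HU; auto. }
  split; auto. intros A.
  assert (HP'B : P' B = 1) by (apply (HP1 W F (psingle P)); apply HU; auto).
  assert (E1 : P' A = P' (minter A B)).
  { rewrite (pr_split P' A B).
    assert (P' (minter A (mcompl B)) <= P' (mcompl B)) by (apply pr_mono; simpl; tauto).
    rewrite pr_compl in H. pose proof (pr_nonneg F P' (minter A (mcompl B))). lra. }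
  rewrite E1. set (A0 := minter A B).
  destruct (classic (exists w, proj1_sig A w /\ proj1_sig B w)) as [[a1 Ha1]|NA].
  2:{ rewrite !(pr_empty _ A0) by (intros w Hw; apply NA; exists w; exact Hw). unfold Rdiv; ring. }
  destruct (classic (exists w, proj1_sig B w /\ ~ proj1_sig A w)) as [[b1 Hb1]|NB].
  2:{ rewrite (pr_ext P' A0 B), (pr_ext P A0 B).
      - rewrite HP'B. field. lra.
      - intros w; simpl. split; [tauto|]. intros HBw; split; auto. apply NNPP; intros HA; apply NB; eauto.
      - intros w; simpl. split; [tauto|]. intros HBw; split; auto. apply NNPP; intros HA; apply NB; eauto. }
  pose proof (proj2_sig A) as HA. pose proof (proj2_sig B) as HB. simpl in HA, HB.
  destruct (classic (exists w, ~ proj1_sig B w)) as [[c1 Hc1]|NC].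
  - set (f := fun w => if excluded_middle_informative (proj1_sig B w)
                       then Some (if excluded_middle_informative (proj1_sig A w) then true else false)
                       else None).
    apply (transfer Upd HP1 HP2 W F P B P' HU HPB (option bool) f) with (a0 := Some true) (b0 := Some false).
    + intros y. destruct y as [[|]|].
      * exists a1. unfold f. destruct excluded_middle_informative; [|tauto].
        destruct excluded_middle_informative; [auto|tauto].
      * exists b1. unfold f. destruct excluded_middle_informative; [|tauto].
        destruct excluded_middle_informative; [tauto|auto].
      * exists c1. unfold f. destruct excluded_middle_informative; [tauto|auto].
    + intros S.
      apply (in_alg_ext F (fun w => ((proj1_sig A w /\ proj1_sig B w) /\ S (Some true))
                                 \/ (((proj1_sig B w /\ ~ proj1_sig A w) /\ S (Some false))
                                 \/ ((~ proj1_sig B w) /\ S None)))).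
      * intros w. unfold f. destruct excluded_middle_informative; [destruct excluded_middle_informative|]; tauto.
      * apply alg_union; [|apply alg_union]; apply in_alg_and_c.
        -- apply alg_inter; auto.
        -- apply alg_inter; auto. apply alg_compl; auto.
        -- apply alg_compl; auto.
    + discriminate.
    + intros w. unfold f. destruct excluded_middle_informative; [destruct excluded_middle_informative|];
        split; intros; try tauto; try discriminate; auto.
      destruct H; discriminate.
    + intros w. unfold A0, f; simpl. destruct excluded_middle_informative; [destruct excluded_middle_informative|];
        split; intros; try tauto; try discriminate; auto; try (injection H; intros; discriminate).
  - set (f := fun w => if excluded_middle_informative (proj1_sig A w) then true else false).
    assert (HBall : forall w, proj1_sig B w) by (intros w; apply NNPP; intros H; apply NC; eauto).
    apply (transfer Upd HP1 HP2 W F P B P' HU HPB bool f) with (a0 := true) (b0 := false).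
    + intros y. destruct y.
      * exists a1. unfold f. destruct excluded_middle_informative; [auto|tauto].
      * exists b1. unfold f. destruct excluded_middle_informative; [tauto|auto].
    + intros S.
      apply (in_alg_ext F (fun w => (proj1_sig A w /\ S true) \/ ((~ proj1_sig A w) /\ S false))).
      * intros w. unfold f. destruct excluded_middle_informative; tauto.
      * apply alg_union; apply in_alg_and_c; auto. apply alg_compl; auto.
    + discriminate.
    + intros w. split; intros; auto. destruct (f w); auto.
    + intros w. unfold A0, f; simpl. destruct excluded_middle_informative;
        split; intros; try tauto; try discriminate; auto; try (split; auto).
Qed.
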